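(* Let $\mathcal K$ be an abstract Krivine structure. For a set $I$ and $\varphi,\psi:I\to\mathcal P(\Pi)$ write $\varphi\vdash\psi$ iff there exists $t\in\mathrm{QP}$ such that for all $i\in I$, $t\perp x$ for every $x\in\{s\cdot\pi:s\in{}^\perp\varphi(i),\ \pi\in\psi(i)\}$. Let $\mathbf P(\mathcal K)$ be the indexed preorder $I\mapsto(\mathcal P(\Pi)^I,\vdash)$, $f\mapsto f^*$ with $f^*(\varphi)=\varphi\circ f$, and $\mathbf P_\bullet(\mathcal K)$ the indexed preorder $I\mapsto(\mathcal P_\bullet(\Pi)^I,\vdash)$, $f\mapsto f^*$. Then the canonical inclusion $\mathbf P_\bullet(\mathcal K)\hookrightarrow\mathbf P(\mathcal K)$ is an equivalence of indexed preorders.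
   Context: An abstract Krivine structure $\mathcal K$ consists of sets $\Lambda,\Pi$, a relation $\perp\subseteq\Lambda\times\Pi$, a map $\mathrm{push}$ written $t\cdot\pi$ (associating to the right), an application $ts$ on $\Lambda$, a subset $\mathrm{QP}\subseteq\Lambda$ closed under application, and $\mathsf K,\mathsf S\in\mathrm{QP}$ with: $t\perp s\cdot\pi\Rightarrow ts\perp\pi$; $t\perp\pi\Rightarrow\mathsf K\perp t\cdot s\cdot\pi$; $tu(su)\perp\pi\Rightarrow\mathsf S\perp t\cdot s\cdot u\cdot\pi$. Polars: $L^\perp=\{\pi:\forall t\in L,\ t\perp\pi\}$, ${}^\perp P=\{t:\forall\pi\in P,\ t\perp\pi\}$; $\overline P=({}^\perp P)^\perp$; $\widehat P=\bigcup_{\pi\in P}\overline{\{\pi\}}$; $\mathcal P_\bullet(\Pi)=\{P:\widehat P=P\}$. An indexed preorder is a functor $\mathbf{Set}^{op}\to\mathbf{Ord}$. An indexed monotone map $\sigma:\mathbf C\to\mathbf D$ is a family of monotone maps $\sigma_I:\mathbf C(I)\to\mathbf D(I)$ with $\sigma_J(f^*\varphi)\cong f^*(\sigma_I\varphi)$ for all $f:J\to I$ (where $\cong$ means $\le$ both ways); it is an equivalence if there is an indexed monotone $\tau:\mathbf D\to\mathbf C$ with $\tau\circ\sigma\cong\mathrm{id}$ and $\sigma\circ\tau\cong\mathrm{id}$ componentwise and pointwise. *)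

(* Defs.v *)
Set Implicit Arguments.

Record AKS := {
  Lam : Type;
  Pi : Type;
  perp : Lam -> Pi -> Prop;
  push : Lam -> Pi -> Pi;
  app : Lam -> Lam -> Lam;
  QP : Lam -> Prop;
  QP_app : forall t s, QP t -> QP s -> QP (app t s);
  kK : Lam;
  kS : Lam;
  QP_K : QP kK;
  QP_S : QP kS;
  ax_push : forall t s pi, perp t (push s pi) -> perp (app t s) pi;
  ax_K : forall t s pi, perp t pi -> perp kK (push t (push s pi));
  ax_S : forall t s u pi, perp (app (app t u) (app s u)) pi ->
           perp kS (push t (push s (push u pi)))
}.

Section Polars.
Variable K : AKS.

Definition lpolar (L : Lam K -> Prop) : Pi K -> Prop :=
  fun pi => forall t, L t -> perp K t pi.
Definition rpolar (P : Pi K -> Prop) : Lam K -> Prop :=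
  fun t => forall pi, P pi -> perp K t pi.
Definition bclos (P : Pi K -> Prop) : Pi K -> Prop := lpolar (rpolar P).
Definition hat (P : Pi K -> Prop) : Pi K -> Prop :=
  fun x => exists pi, P pi /\ bclos (fun y => y = pi) x.
Definition Pbullet : Type := { P : Pi K -> Prop | forall x, hat P x <-> P x }.

Definition entails (I : Type) (phi psi : I -> Pi K -> Prop) : Prop :=
  exists t, QP K t /\
    forall i s pi, rpolar (phi i) s -> psi i pi -> perp K t (push K s pi).
End Polars.

(** * Indexed preorders (functors Set^op -> Ord), given by their data *)
Record IndexedPreorder := {
  ip_car : Type -> Type;
  ip_le : forall {I}, ip_car I -> ip_car I -> Prop;
  ip_re : forall {I J}, (J -> I) -> ip_car I -> ip_car J
}.

Definition ip_iso (C : IndexedPreorder) {I} (x y : ip_car C I) : Prop :=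
  ip_le C x y /\ ip_le C y x.

Definition IndexedMonotone (C D : IndexedPreorder) : Type :=
  forall I, ip_car C I -> ip_car D I.

Definition is_indexed_monotone C D (s : IndexedMonotone C D) : Prop :=
  (forall I (x y : ip_car C I), ip_le C x y -> ip_le D (s I x) (s I y)) /\
  (forall I J (f : J -> I) (x : ip_car C I),
      ip_iso D (s J (ip_re C f x)) (ip_re D f (s I x))).

Definition is_indexed_equivalence C D (s : IndexedMonotone C D) : Prop :=
  is_indexed_monotone s /\
  exists t : IndexedMonotone D C,
    is_indexed_monotone t /\
    (forall I (x : ip_car C I), ip_iso C (t I (s I x)) x) /\
    (forall I (y : ip_car D I), ip_iso D (s I (t I y)) y).

Definition PK (K : AKS) : IndexedPreorder := {|
  ip_car := fun I => I -> Pi K -> Prop;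
  ip_le := fun I phi psi => @entails K I phi psi;
  ip_re := fun I J f phi => fun j => phi (f j)
|}.

Definition PbK (K : AKS) : IndexedPreorder := {|
  ip_car := fun I => I -> Pbullet K;
  ip_le := fun I phi psi =>
     @entails K I (fun i => proj1_sig (phi i)) (fun i => proj1_sig (psi i));
  ip_re := fun I J f phi => fun j => phi (f j)
|}.

Definition incl (K : AKS) : IndexedMonotone (PbK K) (PK K) :=
  fun I phi => fun i => proj1_sig (phi i).

(* Main.v *)
Require Import Defs.

Section S.
Variable K : AKS.

Definition kI : Lam K := app K (app K (kS K) (kK K)) (kK K).

Lemma QP_I : QP K kI.
Proof. unfold kI. apply QP_app; [apply QP_app|]; auto using QP_K, QP_S. Qed.

Lemma I_ok : forall s pi, perp K s pi -> perp K kI (push K s pi).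
Proof.
  intros s pi H. unfold kI. apply ax_push, ax_push, ax_S.
  apply ax_push, ax_push, ax_K. exact H.
Qed.

Lemma L1 : forall I (phi psi : I -> Pi K -> Prop),
  (forall i s pi, @rpolar K (phi i) s -> psi i pi -> perp K s pi) ->
  @entails K I phi psi.
Proof.
  intros I phi psi H. exists kI. split. apply QP_I.
  intros i s pi Hs Hp. apply I_ok. eauto.
Qed.

Lemma rpolar_bclos : forall P t, @rpolar K (@bclos K P) t -> @rpolar K P t.
Proof. intros P t H pi Hp. apply H. intros u Hu. apply Hu, Hp. Qed.

Lemma bclos_Pb : forall P x, @hat K (@bclos K P) x <-> @bclos K P x.
Proof.
  intros P x; split.
  - intros [pi [Hpi Hx]] t Ht. apply Hx. intros y ->. apply Hpi, Ht.
  - intros Hx. exists x. split; auto. intros t Ht. apply Ht; reflexivity.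
Qed.

Definition tb (I : Type) (phi : I -> Pi K -> Prop) : I -> Pbullet K :=
  fun i => exist _ (@bclos K (phi i)) (bclos_Pb (phi i)).

Lemma tb_mono : forall I (phi psi : I -> Pi K -> Prop),
  @entails K I phi psi -> @entails K I (fun i => @bclos K (phi i)) (fun i => @bclos K (psi i)).
Proof.
  intros I phi psi [u [Hu H]].
  exists (app K (app K (kS K) (app K (kK K) u)) kI). split.
  { apply QP_app; [apply QP_app|]; auto using QP_S, QP_I, QP_app, QP_K. }
  intros i s pi Hs Hp. apply rpolar_bclos in Hs.
  apply ax_push, ax_push, ax_S. apply Hp. intros pi0 H0.
  apply ax_push, ax_push, ax_push, ax_K. apply (H i); auto.
  intros p Hpp. apply ax_push, I_ok, Hs, Hpp.
Qed.
End S.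

Theorem mainTheorem15 (K : AKS) : is_indexed_equivalence (@incl K).
Proof.
  split.
  - split.
    + intros I x y H. exact H.
    + intros I J f x. split; apply L1; intros i s pi Hs Hp; apply Hs, Hp.
  - exists (@tb K). split; [split|split].
    + intros I x y H. apply tb_mono. exact H.
    + intros I J f x. split; apply L1; intros i s pi Hs Hp; apply Hs, Hp.
    + intros I x. split; apply L1; simpl; intros i s pi Hs Hp.
      * apply rpolar_bclos in Hs. apply Hs, Hp.
      * apply Hp, Hs.
    + intros I y. split; apply L1; simpl; intros i s pi Hs Hp.
      * apply rpolar_bclos in Hs. apply Hs, Hp.
      * apply Hp, Hs.
Qed.
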